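(* Let $c>0$ and let $\nu,\tilde\nu$ be probability measures on $\mathbb R_+$ different from $\boldsymbol d_0$. Suppose that for $i=1,2$ the triple $(\boldsymbol{\tilde\delta}_i,\boldsymbol\delta_i,\boldsymbol x_i)$ satisfies: $\boldsymbol{\tilde\delta}_i\in\widetilde{\mathcal D}$, $\boldsymbol x_i\in\mathbb R\setminus\{0\}$, $\boldsymbol\delta_i=c\int\frac{t}{-\boldsymbol x_i(1+\boldsymbol{\tilde\delta}_i t)}\nu(dt)\in\mathcal D$, $\boldsymbol{\tilde\delta}_i=\int\frac{t}{-\boldsymbol x_i(1+\boldsymbol\delta_i t)}\tilde\nu(dt)$, and $$1-\boldsymbol x_i^2\Bigl(c\int\frac{t^2}{\boldsymbol x_i^2(1+\boldsymbol{\tilde\delta}_i t)^2}\nu(dt)\Bigr)\Bigl(\int\frac{t^2}{\boldsymbol x_i^2(1+\boldsymbol\delta_i t)^2}\tilde\nu(dt)\Bigr)>0.$$ If $\boldsymbol{\tilde\delta}_1<\boldsymbol{\tilde\delta}_2$, $\boldsymbol x_1\boldsymbol x_2>0$, and $[\min(\boldsymbol\delta_1,\boldsymbol\delta_2),\max(\boldsymbol\delta_1,\boldsymbol\delta_2)]\subset\mathcal D$, then $\boldsymbol x_1<\boldsymbol x_2$.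
   Context: $\boldsymbol d_0$ is the Dirac mass at $0$. Define $\mathcal D=\{0\}\cup\{\boldsymbol\delta\in\mathbb R\setminus\{0\}:-\boldsymbol\delta^{-1}\notin\operatorname{supp}(\tilde\nu)\}$ if $\operatorname{supp}(\tilde\nu)$ is compact and $\mathcal D=\{\boldsymbol\delta\in\mathbb R\setminus\{0\}:-\boldsymbol\delta^{-1}\notin\operatorname{supp}(\tilde\nu)\}$ otherwise; $\widetilde{\mathcal D}$ is defined in the same way with $\nu$ in place of $\tilde\nu$. *)

(* Defs.v *)
From HB Require Import structures.
From mathcomp Require Import all_boot all_order all_algebra.
From mathcomp Require Import all_classical all_reals all_analysis.
Set Implicit Arguments. Unset Strict Implicit. Unset Printing Implicit Defensive.
Import Order.TTheory GRing.Theory Num.Theory.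
Import numFieldNormedType.Exports.
Local Open Scope classical_set_scope.
Local Open Scope ring_scope.

Definition supp (R : realType) (mu : set R -> \bar R) : set R :=
  [set x | forall e : R, 0 < e -> (0 < mu (ball x e))%E].

(* The domain D associated to a measure mu (D uses tilde-nu, tilde-D uses nu). *)
Definition domD (R : realType) (mu : set R -> \bar R) : set R :=
  [set d | (d = 0 /\ compact (supp mu)) \/ (d != 0 /\ ~ supp mu (- d^-1))].

Definition admissible (R : realType) (c : R) (nu nut : set R -> \bar R)
  (td d x : R) : Prop :=
  [/\ domD nu td /\ x != 0,
      d%:E = (c%:E * \int[nu]_t (t / (- x * (1 + td * t)))%:E)%E /\ domD nut d,
      td%:E = (\int[nut]_t (t / (- x * (1 + d * t)))%:E)%E &
      (0 < 1 - (x ^+ 2)%:E *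
         ((c%:E * \int[nu]_t (t ^+ 2 / (x ^+ 2 * (1 + td * t) ^+ 2))%:E)
          * \int[nut]_t (t ^+ 2 / (x ^+ 2 * (1 + d * t) ^+ 2))%:E))%E].

(* Main.v *)
From HB Require Import structures.
From mathcomp Require Import all_boot all_order all_algebra.
From mathcomp Require Import all_classical all_reals all_analysis.
Require Import Defs.
From mathcomp Require Import ring lra.
Import Order.TTheory GRing.Theory Num.Theory.
Import numFieldNormedType.Exports.
Local Open Scope classical_set_scope.
Local Open Scope ring_scope.
Set Implicit Arguments. Unset Strict Implicit.
Lemma measurable_invR (R : realType) : measurable_fun [set: R] (@GRing.inv R).
Proof.
have -> : [set: R] = [set~ (0:R)] `|` [set 0].
  by apply/seteqP; split => x //= _; case: (eqVneq x 0) => [->|/eqP]; [right|left].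
apply/measurable_funU.
- apply: measurableC; exact: measurable_set1.
- exact: measurable_set1.
split; last exact: measurable_fun_set1.
apply: measurable_realfun.open_continuous_measurable_fun.
  exact: closed_openC (compact_closed (@Rhausdorff R) (@compact_set1 _ _)).
by move=> x /set_mem /eqP x0; apply: inv_continuous.
Qed.

Lemma supp_null (R : realType) (mu : probability R R) :
  exists N : set R, [/\ measurable N, mu N = 0%E & ~` supp mu `<=` N].
Proof.
pose F (n : nat) : set R := match unpickle n : option (rat * rat) with
 | Some (c, r) => if (mu (@ball _ R (ratr c) (ratr r)) == 0%E)
                  then @ball _ R (ratr c) (ratr r) else set0
 | None => set0 end.
have mF : forall n, measurable (F n).
  move=> n; rewrite /F; case: unpickle => [[c r]|]; last exact: measurable0.
  by case: ifP => _; [exact: measurable_realfun.measurable_ball| exact: measurable0].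
have mUF : measurable (\bigcup_n F n) by exact: bigcup_measurable.
exists (\bigcup_n F n); split => //.
- apply/eqP; rewrite eq_le measure_ge0 andbT.
  apply: le_trans (measure_sigma_subadditive mu mF mUF (@subset_refl _ _)) _.
  rewrite eseries0 // => n _ _; rewrite /F; case: unpickle => [[c r]|]; last exact: measure0.
  by case: ifP => [/eqP//|_]; exact: measure0.
- move=> x /= nsx.
  have [e [e0 me]] : exists e, 0 < e /\ mu (ball x e) = 0%E.
    apply: contrapT => h; apply: nsx => e e0.
    rewrite lt0e measure_ge0 andbT; apply/negP => /eqP h0; apply: h; exists e; done.
  have [c [r [xB Bs]]] := open_subball_rat (ball_open x e) (mem_set (ballxx x e0)).
  exists (pickle (c, r)); first exact: I.
  rewrite /F pickleK.
  have -> : (mu (@ball _ R (ratr c) (ratr r)) == 0%E).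
    rewrite eq_le measure_ge0 andbT -me; apply: le_measure => //; rewrite inE.
    exact: measurable_realfun.measurable_ball.
    exact: measurable_realfun.measurable_ball.
  exact: set_mem xB.
Qed.

Section gen.
Variables (R : realType) (mu : probability R R).

Lemma nsupp_ball x : ~ supp mu x -> exists e, 0 < e /\ mu (ball x e) = 0%E.
Proof.
move=> nsx; apply: contrapT => h; apply: nsx => e e0.
rewrite lt0e measure_ge0 andbT; apply/negP => /eqP h0; apply: h; exists e; done.
Qed.

Lemma supp_far x e t : mu (ball x e) = 0%E -> supp mu t -> e <= `|x - t|.
Proof.
move=> me st; rewrite leNgt; apply/negP => xte.
have r0 : 0 < e - `|x - t| by rewrite subr_gt0.
have := st _ r0; rewrite lt_neqAle => /andP[/negP h _]; apply: h.
rewrite eq_sym eq_le measure_ge0 andbT -me.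
apply: le_measure; rewrite ?inE; try exact: measurable_realfun.measurable_ball.
move=> y; rewrite -!ball_normE /= => ty.
rewrite (le_lt_trans (ler_distD t x y)) // -ltrBrDl; done.
Qed.

Lemma dom_bound a : domD mu a -> exists K, 0 < K /\ forall t, supp mu t ->
  [/\ 1 + a * t != 0, `|t / (1 + a * t)| <= K & `|(1 + a * t)^-1| <= K].
Proof.
case=> [[-> cs]|[a0 ns]].
  case: (compact_bounded cs) => M [_ /(_ (M+1)) HM].
  have {}HM : supp mu `<=` [set x | `|x| <= M + 1] by apply: HM; rewrite ltrDl.
  exists (Num.max 1 (M+1)); split; first by rewrite lt_max ltr01.
  move=> t st; rewrite mul0r addr0 invr1 mulr1 normr1; split => //.
  - by rewrite le_max (HM t st) orbT.
  - by rewrite le_max lexx.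
have [e [e0 me]] := @nsupp_ball _ ns.
have aa : 0 < `|a| by rewrite normr_gt0.
exists (`|a|^-1 + (`|a| ^+ 2 * e)^-1 + (`|a| * e)^-1); split.
  by rewrite !addr_gt0 // invr_gt0 ?mulr_gt0 ?exprn_gt0.
move=> t st; have far := @supp_far _ _ _ me st.
have ts : 1 + a * t = a * (t - - a^-1) by rewrite mulrDr opprK mulrV ?unitfE // addrC.
set s := `|t - - a^-1|.
have se : e <= s by rewrite /s distrC.
have s0 : 0 < s by exact: lt_le_trans e0 se.
have hn : `|1 + a * t| = `|a| * s by rewrite ts normrM.
have n0 : 1 + a * t != 0 by rewrite -normr_eq0 hn mulf_neq0 // ?gt_eqF.
split => //.
- rewrite normrM normrV ?unitfE // hn.
  have tb : `|t| <= s + `|a|^-1.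
    have -> : t = (t - - a^-1) + (- a^-1) by rewrite opprK addrK.
    by rewrite (le_trans (ler_normD _ _)) // normrN normrV ?unitfE.
  apply: (@le_trans _ _ ((s + `|a|^-1) / (`|a| * s))).
    by rewrite ler_pM2r // invr_gt0 mulr_gt0.
  have -> : (s + `|a|^-1) / (`|a| * s) = `|a|^-1 + (`|a| ^+ 2 * s)^-1.
    by field; rewrite !gt_eqF.
  rewrite -addrA lerD2l.
  apply: (@le_trans _ _ ((`|a| ^+ 2 * e)^-1)); last by rewrite lerDl invr_ge0 mulr_ge0 // ltW.
  by rewrite lef_pV2 ?posrE ?mulr_gt0 ?exprn_gt0 // ler_pM2l ?exprn_gt0.
- rewrite normrV ?unitfE // hn.
  apply: (@le_trans _ _ ((`|a| * e)^-1)); last by rewrite lerDr addr_ge0 // invr_ge0 ?mulr_ge0 // ltW.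
  by rewrite lef_pV2 ?posrE ?mulr_gt0 // ler_pM2l.
Qed.
End gen.

Section integ.
Variables (R : realType) (mu : probability R R) (N : set R).
Hypotheses (mN : measurable N) (muN : mu N = 0%E).

Definition nice (f : R -> R) :=
  measurable_fun setT f /\ exists K, 0 <= K /\ forall t, ~ N t -> `|f t| <= K.

Definition I (f : R -> R) := fine (\int[mu]_t (f t)%:E).

Lemma negN (P : R -> Prop) : (forall t, ~ N t -> P t) -> {ae mu, forall t, P t}.
Proof.
move=> h; exists N; split => // t /= nP; apply: contrapT => nt; apply: nP; exact: h.
Qed.

Lemma nice_int f : nice f -> mu.-integrable setT (EFin \o f).
Proof.
move=> [mf [K [K0 hK]]]; apply/integrableP; split.
  exact/measurable_realfun.measurable_EFinP.
apply: (le_lt_trans (integral_le_bound K%:E _ _ _ _)) => //.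
- exact/measurable_realfun.measurable_EFinP.
- by apply: negN => t nt _ /=; rewrite lee_fin hK.
- apply: lte_mul_pinfty => //.

  by apply: (le_lt_trans (probability_le1 mu _)); [exact: measurableT | exact: ltry].
Qed.

Lemma IE f : nice f -> (\int[mu]_t (f t)%:E = (I f)%:E)%E.
Proof. by move=> nf; rewrite /I fineK // (integrable_fin_num _ (@nice_int _ nf)). Qed.

Lemma niceD f g : nice f -> nice g -> nice (fun t => f t + g t).
Proof.
move=> [mf [K [K0 hK]]] [mg [L [L0 hL]]]; split; first exact: measurable_realfun.measurable_funD.
exists (K + L); split; first exact: addr_ge0.
by move=> t nt; rewrite (le_trans (ler_normD _ _)) // lerD ?hK ?hL.
Qed.

Lemma niceM f g : nice f -> nice g -> nice (fun t => f t * g t).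
Proof.
move=> [mf [K [K0 hK]]] [mg [L [L0 hL]]]; split; first exact: measurable_realfun.measurable_funM.
exists (K * L); split; first exact: mulr_ge0.
by move=> t nt; rewrite normrM ler_pM ?hK ?hL.
Qed.

Lemma niceC k : nice (fun _ => k).
Proof. split; first exact: measurable_cst. by exists `|k|; split. Qed.

Lemma niceZ k f : nice f -> nice (fun t => k * f t).
Proof. by move=> nf; apply: niceM => //; exact: niceC. Qed.

Lemma ID f g : nice f -> nice g -> I (fun t => f t + g t) = I f + I g.
Proof.
move=> nf ng; apply: EFin_inj; rewrite -IE ?EFinD -?IE //; last exact: niceD.
rewrite -integralD_EFin //; exact: nice_int.
Qed.

Lemma IZ k f : nice f -> I (fun t => k * f t) = k * I f.
Proof.
move=> nf; apply: EFin_inj; rewrite -IE ?EFinM -?IE //; last exact: niceZ.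
rewrite -integralZl //; exact: nice_int.
Qed.

Lemma Iae f g : nice f -> nice g -> (forall t, ~ N t -> f t = g t) -> I f = I g.
Proof.
move=> [mf _] [mg _] h; rewrite /I; congr fine.
apply: ae_eq_integral => //; try exact/measurable_realfun.measurable_EFinP.
by apply: negN => t nt _; rewrite h.
Qed.

Lemma Ige0 f : nice f -> (forall t, ~ N t -> 0 <= f t) -> 0 <= I f.
Proof.
move=> nf h.
have nI : nice (fun t => f t * \1_(~` N) t).
  apply: niceM => //; split; first by apply: measurable_realfun.measurable_indic; exact: measurableC.
  by exists 1; split => // t _; rewrite indicE; case: (_ \in _); rewrite ?normr1 ?normr0.
rewrite (@Iae _ _ nf nI); last by move=> t nt; rewrite indicE mem_set // mulr1.
rewrite /I fine_ge0 // integral_ge0 // => t _; rewrite lee_fin indicE.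
by case: (boolP (t \in ~` N)) => [/set_mem/h|_]; rewrite ?mulr1 ?mulr0.
Qed.

Lemma CS f g : nice f -> nice g ->
  I (fun t => f t * g t) ^+ 2 <= I (fun t => f t ^+ 2) * I (fun t => g t ^+ 2).
Proof.
move=> nf ng.
set F := I (fun t => f t ^+ 2); set G := I (fun t => f t * g t);
set H := I (fun t => g t ^+ 2).
have nff : nice (fun t => f t ^+ 2) by rewrite /= (_ : (fun t => f t ^+ 2) = (fun t => f t * f t)); [exact: niceM | apply: funext => t; rewrite expr2].
have ngg : nice (fun t => g t ^+ 2) by rewrite /= (_ : (fun t => g t ^+ 2) = (fun t => g t * g t)); [exact: niceM | apply: funext => t; rewrite expr2].
have nfg : nice (fun t => f t * g t) by exact: niceM.
have q s : 0 <= F + s * (2 * G) + s ^+ 2 * H.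
  have n1 : nice (fun t => (s * 2) * (f t * g t)) by exact: niceZ.
  have n2 : nice (fun t => s ^+ 2 * g t ^+ 2) by exact: niceZ.
  have n3 : nice (fun t => f t ^+ 2 + (s * 2) * (f t * g t)) by exact: niceD.
  have n4 : nice (fun t => (f t + s * g t) ^+ 2).
    rewrite (_ : (fun t => _) = (fun t => (f t + s * g t) * (f t + s * g t))); last first.
      by apply: funext => t; rewrite expr2.
    by apply: niceM; apply: niceD => //; exact: niceZ.
  have -> : F + s * (2 * G) + s ^+ 2 * H =
     I (fun t => (f t + s * g t) ^+ 2).
    rewrite (@Iae _ (fun t => f t ^+ 2 + (s * 2) * (f t * g t) + s ^+ 2 * g t ^+ 2) n4);
      [|by apply: niceD|by move=> t _; ring].
    rewrite (@ID _ _ n3 n2) (@ID _ _ nff n1) (@IZ _ _ nfg) (@IZ _ _ ngg) /F /G /H; ring.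
  by apply: Ige0 => [|t _]; [exact: n4 | exact: sqr_ge0].
have H0 : 0 <= H by apply: Ige0 => // t _; exact: sqr_ge0.
have [Hz|Hp] := eqVneq H 0.
  have G0 : G = 0.
    apply: contrapT => /eqP Gn.
    have := q (- (F + 1) / (2 * G)); rewrite Hz mulr0 addr0.
    have -> : - (F + 1) / (2 * G) * (2 * G) = - (F + 1) by field.
    lra.
  by rewrite G0 Hz expr0n mulr0.
have Hpos : 0 < H by rewrite lt0r Hp.
have := q (- G / H).
have -> : F + - G / H * (2 * G) + (- G / H) ^+ 2 * H = F - G ^+ 2 / H by field.
by rewrite subr_ge0 ler_pdivrMr // mulrC.
Qed.

End integ.

Lemma final_alg (R : realFieldType) (c x1 x2 a1 a2 b1 b2 P1 P2 Q1 Q2 A0 A11 A22 B B11 B22 C : R) :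
 0 < c -> x1 != 0 -> x2 != 0 ->
 b1 = c * ((-x1)^-1 * P1) -> b2 = c*((-x2)^-1 * P2) ->
 a1 = (-x1)^-1 * Q1 -> a2 = (-x2)^-1 * Q2 ->
 0 < 1 - x1^+2 * ((c * ((x1^+2)^-1 * A11)) * ((x1^+2)^-1 * B11)) ->
 0 < 1 - x2^+2 * ((c * ((x2^+2)^-1 * A22)) * ((x2^+2)^-1 * B22)) ->
 P1 - P2 = (a2 - a1) * A0 -> Q1 - Q2 = (b2 - b1) * B -> b1 * B - Q2 = - C ->
 A0^+2 <= A11 * A22 -> B^+2 <= B11*B22 -> 0 <= A11 -> 0 <= A22 -> 0 <= B11 -> 0 <= B22 ->
 0 <= C -> a1 < a2 -> 0 < x1 * x2 -> x1 < x2.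
Proof.
move=> c0 x10 x20 hb1 hb2 ha1 ha2 s1 s2 eP eQ eC cs1 cs2 A110 A220 B110 B220 C0 a12 x12.
have E1 : c * P1 = - (x1 * b1) by rewrite hb1; field.
have E2 : c * P2 = - (x2 * b2) by rewrite hb2; field.
have E3 : Q1 = - (x1 * a1) by rewrite ha1; field.
have E4 : Q2 = - (x2 * a2) by rewrite ha2; field.
have S1 : c * A11 * B11 < x1 ^+ 2.
  have e : x1^+2 * ((c * ((x1^+2)^-1 * A11)) * ((x1^+2)^-1 * B11)) = c * A11 * B11 / x1^+2.
    by field.
  rewrite e in s1.
  have xx : 0 < x1 ^+ 2 by rewrite lt0r sqrf_eq0 x10 sqr_ge0.
  by move: s1; rewrite subr_gt0 ltr_pdivrMr // mul1r.
have S2 : c * A22 * B22 < x2 ^+ 2.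
  have e : x2^+2 * ((c * ((x2^+2)^-1 * A22)) * ((x2^+2)^-1 * B22)) = c * A22 * B22 / x2^+2.
    by field.
  rewrite e in s2.
  have xx : 0 < x2 ^+ 2 by rewrite lt0r sqrf_eq0 x20 sqr_ge0.
  by move: s2; rewrite subr_gt0 ltr_pdivrMr // mul1r.
have key : (x2 - x1) * C = (a2 - a1) * (x1 * x2 - c * A0 * B).
  have eA : (a2 - a1) * (c * A0) = x2 * b2 - x1 * b1.
    by rewrite mulrCA -eP mulrBr E1 E2; ring.
  have eB : (b2 - b1) * B = x2 * a2 - x1 * a1 by rewrite -eQ E3 E4; ring.
  have -> : C = Q2 - b1 * B by rewrite -[C]opprK -eC; ring.
  have -> : (a2 - a1) * (x1 * x2 - c * A0 * B) = (a2 - a1) * x1 * x2 - B * ((a2 - a1) * (c * A0)) by ring.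
  rewrite eA E4.
  have -> : B * (x2 * b2 - x1 * b1) = x2 * ((b2 - b1) * B) + (x2 - x1) * b1 * B by ring.
  rewrite eB; ring.
have AB : c * A0 * B < x1 * x2.
  have h1 : (c * A0 * B) ^+ 2 <= (c * A11 * B11) * (c * A22 * B22).
    have -> : (c * A0 * B) ^+ 2 = c^+2 * (A0 ^+ 2 * B ^+ 2) by ring.
    have -> : (c * A11 * B11) * (c * A22 * B22) = c^+2 * ((A11 * A22) * (B11 * B22)) by ring.
    rewrite ler_pM2l ?exprn_gt0 //; apply: ler_pM => //; exact: sqr_ge0.
  have h2 : (c * A11 * B11) * (c * A22 * B22) < (x1 * x2) ^+ 2.
    rewrite exprMn; apply: ltr_pM => //; by rewrite !mulr_ge0 // ltW.
  have h3 : (c * A0 * B) ^+ 2 < (x1 * x2) ^+ 2 := le_lt_trans h1 h2.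
  nra.
have : 0 < (x2 - x1) * C.
  rewrite key; apply: mulr_gt0; by rewrite subr_gt0.
nra.
Qed.


Lemma niceB (R : realType) (N : set R) f g : nice N f -> nice N g ->
  nice N (fun t => f t - g t).
Proof.
move=> nf ng; rewrite (_ : (fun t => f t - g t) = (fun t => f t + (-1) * g t)).
  by apply: niceD => //; exact: niceZ.
by apply: funext => t; rewrite mulN1r.
Qed.

Lemma IB (R : realType) (mu : probability R R) (N : set R) (mN : measurable N)
  (muN : mu N = 0%E) f g : nice N f -> nice N g ->
  I mu (fun t => f t - g t) = I mu f - I mu g.
Proof.
move=> nf ng; rewrite (_ : (fun t => f t - g t) = (fun t => f t + (-1) * g t)).
  by rewrite (ID mN muN nf (niceZ _ ng)) (IZ mN muN _ ng) mulN1r.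
by apply: funext => t; rewrite mulN1r.
Qed.

Lemma IEk (R : realType) (mu : probability R R) (N : set R) (mN : measurable N)
  (muN : mu N = 0%E) k f : nice N f ->
  (\int[mu]_t (k * f t)%:E = (k * I mu f)%:E)%E.
Proof. by move=> nf; rewrite (IE mN muN (niceZ k nf)) (IZ mN muN _ nf). Qed.

Lemma good (R : realType) (mu : probability R R) :
  mu [set t : R | t < 0] = 0%E ->
  exists N, [/\ measurable N, mu N = 0%E & forall t, ~ N t -> supp mu t /\ 0 <= t].
Proof.
move=> hneg; have [N0 [mN0 muN0 sN0]] := supp_null mu.
have mneg : measurable [set t : R | t < 0].
  by apply: measurable_realfun.open_measurable; exact: open_lt.
have h1 : mu.-negligible N0 by exists N0; split.
have h2 : mu.-negligible [set t : R | t < 0] by exists [set t : R | t < 0]; split.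
have [N [mN muN sN]] := negligibleU h1 h2.
exists N; split => // t nt; split.
  by apply: contrapT => h; apply: nt; apply: sN; left; exact: sN0.
by rewrite leNgt; apply/negP => h; apply: nt; apply: sN; right.
Qed.

Lemma meas_h (R : realType) (a : R) : measurable_fun setT (fun t : R => (1 + a * t)^-1).
Proof.
change (measurable_fun setT (GRing.inv \o (fun t : R => 1 + a * t))).
apply: measurableT_comp; first exact: measurable_invR.
apply: measurable_realfun.measurable_funD; first exact: measurable_cst.
exact: measurable_realfun.mulrl_measurable.
Qed.

Lemma dom_nice (R : realType) (mu : probability R R) (N : set R) a :
  (forall t, ~ N t -> supp mu t /\ 0 <= t) -> domD mu a ->
  [/\ nice N (fun t => t / (1 + a * t)), nice N (fun t => (1 + a * t)^-1)
    & forall t, ~ N t -> 1 + a * t != 0].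
Proof.
move=> hN da; have [K [K0 hK]] := dom_bound da.
split.
- split.
    apply: measurable_realfun.measurable_funM; first exact: measurable_id.
    exact: meas_h.
  by exists K; split; [exact: ltW| move=> t /hN [st _]; case: (hK t st)].
- split; first exact: meas_h.
  by exists K; split; [exact: ltW| move=> t /hN [st _]; case: (hK t st)].
- by move=> t /hN [st _]; case: (hK t st).
Qed.

Unset Implicit Arguments. Set Strict Implicit.

Theorem lemma3p9 (R : realType) (c : R) (nu nut : probability R R)
  (td1 td2 d1 d2 x1 x2 : R) :
  0 < c ->
  nu [set t : R | t < 0] = 0%E ->
  nut [set t : R | t < 0] = 0%E ->
  (nu : set R -> \bar R) <> \d_(0 : R) ->
  (nut : set R -> \bar R) <> \d_(0 : R) ->
  admissible c nu nut td1 d1 x1 ->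
  admissible c nu nut td2 d2 x2 ->
  td1 < td2 ->
  0 < x1 * x2 ->
  (forall d : R, Num.min d1 d2 <= d <= Num.max d1 d2 -> domD nut d) ->
  x1 < x2.
Proof.
move=> c0 hnu hnut _ _ [[dn1 x10] [hd1 dD1] ha1 hs1] [[dn2 x20] [hd2 dD2] ha2 hs2] a12 x12 hint.
have [N1 [mN1 muN1 hN1]] := good hnu.
have [N2 [mN2 muN2 hN2]] := good hnut.
have [np1 _ nz1] := dom_nice hN1 dn1.
have [np2 _ nz2] := dom_nice hN1 dn2.
have [nq1 _ mz1] := dom_nice hN2 dD1.
have [nq2 nh2 mz2] := dom_nice hN2 dD2.
have X2 : forall N f, @nice R N f -> nice N (fun t => f t ^+ 2).
  move=> N f nf; rewrite (_ : (fun t => _) = (fun t => f t * f t)); first exact: niceM.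
  by apply: funext => t; rewrite expr2.
have cv1 : forall (mu : probability R R) (N : set R) (x a : R), measurable N -> mu N = 0%E ->
    nice N (fun t => t / (1 + a * t)) ->
    (\int[mu]_t (t / (- x * (1 + a * t)))%:E = ((-x)^-1 * I mu (fun t => t / (1 + a * t)))%:E)%E.
  move=> mu N x a mN muN nf; rewrite -(IEk mN muN _ nf).
  by apply: eq_integral => t _; congr EFin; rewrite invfM mulrCA.
have cv2 : forall (mu : probability R R) (N : set R) (x a : R), measurable N -> mu N = 0%E ->
    nice N (fun t => t / (1 + a * t)) ->
    (\int[mu]_t (t ^+ 2 / (x ^+ 2 * (1 + a * t) ^+ 2))%:E =
      ((x ^+ 2)^-1 * I mu (fun t => (t / (1 + a * t)) ^+ 2))%:E)%E.
  move=> mu N x a mN muN nf; rewrite -(IEk mN muN _ (X2 _ _ nf)).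
  by apply: eq_integral => t _; congr EFin; rewrite invfM exprMn exprVn mulrCA.
rewrite (cv1 _ _ _ _ mN1 muN1 np1) -EFinM in hd1; have {}hd1 := EFin_inj hd1.
rewrite (cv1 _ _ _ _ mN1 muN1 np2) -EFinM in hd2; have {}hd2 := EFin_inj hd2.
rewrite (cv1 _ _ _ _ mN2 muN2 nq1) in ha1; have {}ha1 := EFin_inj ha1.
rewrite (cv1 _ _ _ _ mN2 muN2 nq2) in ha2; have {}ha2 := EFin_inj ha2.
rewrite (cv2 _ _ _ _ mN1 muN1 np1) (cv2 _ _ _ _ mN2 muN2 nq1) -!EFinM -EFinB lte_fin in hs1.
rewrite (cv2 _ _ _ _ mN1 muN1 np2) (cv2 _ _ _ _ mN2 muN2 nq2) -!EFinM -EFinB lte_fin in hs2.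
have eP : I nu (fun t => t / (1 + td1 * t)) - I nu (fun t => t / (1 + td2 * t)) =
    (td2 - td1) * I nu (fun t => t / (1 + td1 * t) * (t / (1 + td2 * t))).
  rewrite -(IB mN1 muN1 np1 np2) -(IZ mN1 muN1 _ (niceM np1 np2)).
  apply: (Iae mN1 muN1 (niceB np1 np2) (niceZ _ (niceM np1 np2))).
  move=> t nt; have n1 := nz1 t nt; have n2 := nz2 t nt; field.
  by rewrite n1 n2.
have eQ : I nut (fun t => t / (1 + d1 * t)) - I nut (fun t => t / (1 + d2 * t)) =
    (d2 - d1) * I nut (fun t => t / (1 + d1 * t) * (t / (1 + d2 * t))).
  rewrite -(IB mN2 muN2 nq1 nq2) -(IZ mN2 muN2 _ (niceM nq1 nq2)).
  apply: (Iae mN2 muN2 (niceB nq1 nq2) (niceZ _ (niceM nq1 nq2))).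
  move=> t nt; have n1 := mz1 t nt; have n2 := mz2 t nt; field.
  by rewrite n1 n2.
have eC : d1 * I nut (fun t => t / (1 + d1 * t) * (t / (1 + d2 * t))) - I nut (fun t => t / (1 + d2 * t)) =
    - I nut (fun t => t / (1 + d1 * t) * (1 + d2 * t)^-1).
  rewrite -(IZ mN2 muN2 _ (niceM nq1 nq2)) -(IB mN2 muN2 (niceZ _ (niceM nq1 nq2)) nq2).
  rewrite -mulN1r -(IZ mN2 muN2 _ (niceM nq1 nh2)).
  apply: (Iae mN2 muN2 (niceB (niceZ _ (niceM nq1 nq2)) nq2) (niceZ _ (niceM nq1 nh2))).
  move=> t nt; have n1 := mz1 t nt; have n2 := mz2 t nt; field.
  by rewrite n1 n2.
have C0 : 0 <= I nut (fun t => t / (1 + d1 * t) * (1 + d2 * t)^-1).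
  apply: (Ige0 mN2 muN2 (niceM nq1 nh2)) => t nt.
  have [st t0] := hN2 t nt.
  rewrite -mulrA -invfM; apply: mulr_ge0 => //; rewrite invr_ge0 leNgt; apply/negP => hneg.
  have tpos : 0 < t.
    rewrite lt_neqAle t0 andbT; apply/eqP => t0'; move: hneg.
    by rewrite -t0' !mulr0 addr0 mulr1 ltr10.
  pose b := - t^-1.
  have e1 : 1 + d1 * t = t * (d1 - b) by rewrite /b opprK mulrDr mulrV ?unitfE ?gt_eqF // addrC mulrC.
  have e2 : 1 + d2 * t = t * (d2 - b) by rewrite /b opprK mulrDr mulrV ?unitfE ?gt_eqF // addrC mulrC.
  have hprod : (d1 - b) * (d2 - b) < 0.
    move: hneg; rewrite e1 e2 mulrACA -expr2 pmulr_rlt0 //; exact: exprn_gt0.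
  have hb : Num.min d1 d2 <= b <= Num.max d1 d2.
    apply/andP; split; rewrite ?ge_min ?le_max;
    case: (lerP d1 b) => k1; case: (lerP d2 b) => k2 //=; nra.
  case: (hint b hb) => [[b0 _]|[_ nsb]].
    by move: b0; rewrite /b => /eqP; rewrite oppr_eq0 invr_eq0 gt_eqF.
  by apply: nsb; rewrite /b invrN invrK opprK.
apply: (final_alg c0 x10 x20 hd1 hd2 ha1 ha2 hs1 hs2 eP eQ eC
   (CS mN1 muN1 np1 np2) (CS mN2 muN2 nq1 nq2) _ _ _ _ C0 a12 x12).
- by apply: (Ige0 mN1 muN1 (X2 _ _ np1)) => t _; exact: sqr_ge0.
- by apply: (Ige0 mN1 muN1 (X2 _ _ np2)) => t _; exact: sqr_ge0.
- by apply: (Ige0 mN2 muN2 (X2 _ _ nq1)) => t _; exact: sqr_ge0.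
- by apply: (Ige0 mN2 muN2 (X2 _ _ nq2)) => t _; exact: sqr_ge0.
Qed.
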